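(* Let $\delta>0$, let $(x^\star,u^\star)$ satisfy $f(x^\star)+g(x^\star)u^\star=0$, $g^\star:=g(x^\star)$, $\mathcal{C}:=(g^\star)^\top Q$. Let $K_P,K_I\in\mathbb{R}^{m\times m}$ be symmetric positive definite, $K_D\in\mathbb{R}^{m\times m}$ symmetric positive semidefinite, and $\xi^\star:=-K_I^{-1}u^\star$. Consider the closed-loop discrete-time system, whose solutions are sequences $(x_k,\xi_k,u_k)_{k\in\mathbb{N}}$ satisfying for all $k$ $$x_{k+1}=x_k+\delta f(z_k)+\delta g(z_k)u_k,\quad \xi_{k+1}=\xi_k+\delta\tilde y_k,\quad u_k=-K_P\tilde y_k-\tfrac12K_I(\xi_{k+1}+\xi_k)-\tfrac1\delta K_D\mathcal{C}(x_{k+1}-x_k),$$ where $z_k:=\tfrac12(x_{k+1}+x_k)$, $\tilde y_k:=\mathcal{C}(z_k-x^\star)$. Then: (i) The equilibrium $(x^\star,\xi^\star)$ of the closed loop is globally stable: it is Lyapunov stable and every solution is bounded; more precisely, $V_k:=\frac1\delta\big[\tfrac12(x_k-x^\star)^\top Q(x_k-x^\star)+\tfrac12(\xi_k-\xi^\star)^\top K_I(\xi_k-\xi^\star)+\tfrac12(x_k-x^\star)^\top\mathcal{C}^\top K_D\mathcal{C}(x_k-x^\star)\big]$ satisfies $V_{k+1}-V_k=-(z_k-x^\star)^\top Q\big[R+g^\star K_P(g^\star)^\top\big]Q(z_k-x^\star)\le0$ along every solution. (ii) If moreover there exists $\alpha>0$ with $R+g^\star K_P(g^\star)^\top>\alpha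 I_n$, then every solution satisfies $\lim_{k\to\infty}z_k=x^\star$ (and hence $\lim_{k\to\infty}y_k=(g^\star)^\top Qx^\star$ where $y_k=(g^\star)^\top Qz_k$).
   Context: Power converter model: fix integers $n,m\ge1$, a symmetric positive definite $Q\in\mathbb{R}^{n\times n}$, skew-symmetric $J_0,\dots,J_m\in\mathbb{R}^{n\times n}$, symmetric positive semidefinite $R\in\mathbb{R}^{n\times n}$, matrices $G_0,\dots,G_m\in\mathbb{R}^{n\times n}$, and $E\in\mathbb{R}^n$. Define $f(x):=(J_0-R)Qx+G_0E$ and $g(x)\in\mathbb{R}^{n\times m}$ with $i$-th column $J_iQx+G_iE$. $I_n$ is the $n\times n$ identity; for symmetric matrices $A>B$ means $A-B$ is positive definite. *)

(* Defs.v *)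
From HB Require Import structures.
From mathcomp Require Import all_boot all_order all_algebra.
From mathcomp Require Import all_classical all_reals all_analysis.
Set Implicit Arguments. Unset Strict Implicit. Unset Printing Implicit Defensive.
Import Order.TTheory GRing.Theory Num.Theory.
Local Open Scope ring_scope.

Definition qform (R : realType) (n : nat) (A : 'M[R]_n) (v : 'cV[R]_n) : R :=
  (v^T *m A *m v) 0 0.

Definition sym_posdef (R : realType) (n : nat) (A : 'M[R]_n) : Prop :=
  A^T = A /\ forall v : 'cV[R]_n, v != 0 -> 0 < qform A v.
Definition sym_psd (R : realType) (n : nat) (A : 'M[R]_n) : Prop :=
  A^T = A /\ forall v : 'cV[R]_n, 0 <= qform A v.

Definition mx_gt (R : realType) (n : nat) (A B : 'M[R]_n) : Prop :=
  sym_posdef (A - B).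

Definition sqnorm (R : realType) (n : nat) (v : 'cV[R]_n) : R :=
  \sum_(i < n) (v i 0) ^+ 2.

Definition fdrift (R : realType) (n : nat) (J0 Rd Q G0 : 'M[R]_n) (E : 'cV[R]_n)
  (x : 'cV[R]_n) : 'cV[R]_n := (J0 - Rd) *m Q *m x + G0 *m E.

Definition ginput (R : realType) (n m : nat) (J G : 'I_m -> 'M[R]_n) (Q : 'M[R]_n)
  (E : 'cV[R]_n) (x : 'cV[R]_n) : 'M[R]_(n, m) :=
  \matrix_(i < n, j < m) ((J j *m Q *m x + G j *m E) i 0).

Definition midpt (R : realType) (n : nat) (x : nat -> 'cV[R]_n) (k : nat) : 'cV[R]_n :=
  (2%:R)^-1 *: (x k.+1 + x k).

Definition closed_loop_sol (R : realType) (n m : nat)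
  (Q J0 Rd G0 : 'M[R]_n) (J G : 'I_m -> 'M[R]_n) (E : 'cV[R]_n)
  (delta : R) (xs : 'cV[R]_n) (KP KI KD : 'M[R]_m)
  (x : nat -> 'cV[R]_n) (xi u : nat -> 'cV[R]_m) : Prop :=
  let C : 'M[R]_(m, n) := (ginput J G Q E xs)^T *m Q in
  forall k : nat,
    let z := midpt x k in
    let yt := C *m (z - xs) in
    [/\ x k.+1 = x k + delta *: fdrift J0 Rd Q G0 E z
                     + delta *: (ginput J G Q E z *m u k),
        xi k.+1 = xi k + delta *: yt &
        u k = - (KP *m yt) - (2%:R)^-1 *: (KI *m (xi k.+1 + xi k))
              - delta^-1 *: (KD *m C *m (x k.+1 - x k))].

Definition Vlyap (R : realType) (n m : nat)
  (Q : 'M[R]_n) (C : 'M[R]_(m, n)) (KI KD : 'M[R]_m) (delta : R)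
  (xs : 'cV[R]_n) (xis : 'cV[R]_m) (x : 'cV[R]_n) (xi : 'cV[R]_m) : R :=
  delta^-1 * ((2%:R)^-1 * qform Q (x - xs)
              + (2%:R)^-1 * qform KI (xi - xis)
              + (2%:R)^-1 * qform (C^T *m KD *m C) (x - xs)).

(* Main.v *)
Require Import Defs.
From HB Require Import structures.
From mathcomp Require Import all_boot all_order all_algebra.
From mathcomp Require Import all_classical all_reals all_analysis.
From mathcomp Require Import ring lra.
Import Order.TTheory GRing.Theory Num.Theory.
Import numFieldNormedType.Exports.
Local Open Scope classical_set_scope.
Local Open Scope ring_scope.
Set Implicit Arguments. Unset Strict Implicit. Unset Printing Implicit Defensive.

Section BF.
Variable R : realType.

Definition bf p q (A : 'M[R]_(p, q)) (u : 'cV[R]_p) (v : 'cV[R]_q) : R :=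
  (u^T *m A *m v) 0 0.

Lemma qformE n (A : 'M[R]_n) v : qform A v = bf A v v. Proof. by []. Qed.

Lemma bfDl p q (A : 'M[R]_(p, q)) u1 u2 v : bf A (u1 + u2) v = bf A u1 v + bf A u2 v.
Proof. by rewrite /bf linearD /= !mulmxDl mxE. Qed.
Lemma bfDr p q (A : 'M[R]_(p, q)) u v1 v2 : bf A u (v1 + v2) = bf A u v1 + bf A u v2.
Proof. by rewrite /bf !mulmxDr mxE. Qed.
Lemma bfNl p q (A : 'M[R]_(p, q)) u v : bf A (- u) v = - bf A u v.
Proof. by rewrite /bf linearN /= !mulNmx mxE. Qed.
Lemma bfNr p q (A : 'M[R]_(p, q)) u v : bf A u (- v) = - bf A u v.
Proof. by rewrite /bf !mulmxN mxE. Qed.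
Lemma bfBl p q (A : 'M[R]_(p, q)) u1 u2 v : bf A (u1 - u2) v = bf A u1 v - bf A u2 v.
Proof. by rewrite bfDl bfNl. Qed.
Lemma bfBr p q (A : 'M[R]_(p, q)) u v1 v2 : bf A u (v1 - v2) = bf A u v1 - bf A u v2.
Proof. by rewrite bfDr bfNr. Qed.
Lemma bfZl p q (A : 'M[R]_(p, q)) a u v : bf A (a *: u) v = a * bf A u v.
Proof. by rewrite /bf linearZ /= -!scalemxAl mxE. Qed.
Lemma bfZr p q (A : 'M[R]_(p, q)) a u v : bf A u (a *: v) = a * bf A u v.
Proof. by rewrite /bf -!scalemxAr mxE. Qed.
Lemma bfDm p q (A B : 'M[R]_(p, q)) u v : bf (A + B) u v = bf A u v + bf B u v.
Proof. by rewrite /bf mulmxDr mulmxDl mxE. Qed.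
Lemma bfNm p q (A : 'M[R]_(p, q)) u v : bf (- A) u v = - bf A u v.
Proof. by rewrite /bf mulmxN mulNmx mxE. Qed.
Lemma bfBm p q (A B : 'M[R]_(p, q)) u v : bf (A - B) u v = bf A u v - bf B u v.
Proof. by rewrite bfDm bfNm. Qed.
Lemma bf_mulr p q r (A : 'M[R]_(p, q)) (B : 'M[R]_(q, r)) u v :
  bf A u (B *m v) = bf (A *m B) u v.
Proof. by rewrite /bf !mulmxA. Qed.
Lemma bf_mull p q r (A : 'M[R]_(q, r)) (B : 'M[R]_(q, p)) u v :
  bf A (B *m u) v = bf (B^T *m A) u v.
Proof. by rewrite /bf trmx_mul !mulmxA. Qed.
Lemma bfC p q (A : 'M[R]_(p, q)) u v : bf A u v = bf A^T v u.
Proof.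
rewrite /bf -[in LHS](trmxK (u^T *m A *m v)) [in LHS]mxE.
by rewrite !trmx_mul trmxK mulmxA.
Qed.
Lemma bf0r p q (A : 'M[R]_(p, q)) u : bf A u 0 = 0.
Proof. by rewrite /bf mulmx0 mxE. Qed.
Lemma bf_skew n (S : 'M[R]_n) w : S^T = - S -> bf S w w = 0.
Proof. move=> hS; have := bfC S w w; rewrite hS bfNm => h; lra. Qed.

Lemma sqnormE n (v : 'cV[R]_n) : sqnorm v = bf 1%:M v v.
Proof.
rewrite /bf /sqnorm mulmx1 mxE; apply: eq_bigr => i _.
by rewrite mxE expr2.
Qed.

Lemma sqnorm_ge0 n (v : 'cV[R]_n) : 0 <= sqnorm v.
Proof. by apply: sumr_ge0 => i _; apply: sqr_ge0. Qed.

Lemma sq_le_sqnorm n (v : 'cV[R]_n) i : v i 0 ^+ 2 <= sqnorm v.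
Proof.
rewrite /sqnorm (bigD1 i) //= lerDl.
by apply: sumr_ge0 => j _; apply: sqr_ge0.
Qed.

Definition mxabs n (A : 'M[R]_n) : R := \sum_i \sum_j `|A i j|.

Lemma mxabs_ge0 n (A : 'M[R]_n) : 0 <= mxabs A.
Proof. by apply: sumr_ge0 => i _; apply: sumr_ge0 => j _. Qed.

Lemma bf_bound n (A : 'M[R]_n) v : `|bf A v v| <= mxabs A * sqnorm v.
Proof.
have -> : bf A v v = \sum_i \sum_j (v i 0 * A i j * v j 0).
  rewrite /bf mxE exchange_big /=; apply: eq_bigr => j _.
  rewrite mxE big_distrl /=; apply: eq_bigr => i _.
  by rewrite !mxE.
rewrite /mxabs big_distrl /=.
apply: (le_trans (ler_norm_sum _ _ _)); apply: ler_sum => i _.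
rewrite big_distrl /=.
apply: (le_trans (ler_norm_sum _ _ _)); apply: ler_sum => j _.
have hi := sq_le_sqnorm v i; have hj := sq_le_sqnorm v j.
rewrite normrM normrM.
have hab : `|v i 0| * `|v j 0| <= sqnorm v.
  rewrite -normrM ler_norml; apply/andP; split; nra.
have e : `|v i 0| * `|A i j| * `|v j 0| = `|A i j| * (`|v i 0| * `|v j 0|) by ring.
by rewrite e ler_wpM2l.
Qed.

Lemma posdef_unit n (A : 'M[R]_n) : sym_posdef A -> A \in unitmx.
Proof.
move=> [hs hp]; rewrite -row_free_unit -kermx_eq0; apply/eqP/row_matrixP => i.
rewrite row0; apply/eqP/negPn/negP => hu.
have hu0 : row i (kermx A) *m A = 0 by rewrite -row_mul mulmx_ker row0.
have := hp (row i (kermx A))^T; rewrite trmx_eq0 => /(_ hu).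
by rewrite /qform trmxK hu0 mul0mx mxE ltxx.
Qed.

Lemma coerc n (A : 'M[R]_n) : A^T = A -> (forall v, 0 <= qform A v) ->
  A \in unitmx -> exists K, 0 < K /\ forall v, sqnorm v <= K * qform A v.
Proof.
move=> hs hp hu; set M := mxabs ((invmx A)^T).
have hM : 0 <= M := mxabs_ge0 _.
exists ((M+1)^+2); split; first by nra.
move=> v; set w := invmx A *m v.
have e1 : bf A v w = sqnorm v by rewrite /w bf_mulr mulmxV // sqnormE.
have e2 : bf A w v = sqnorm v by rewrite bfC hs e1.
have e3 : bf A w w = bf ((invmx A)^T) v v.
  by rewrite /w bf_mull bf_mulr -mulmxA mulmxV // mulmx1.
have hb := bf_bound ((invmx A)^T) v. rewrite -e3 in hb.
have hwb : bf A w w <= M * sqnorm v by exact: le_trans (ler_norm _) hb.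
have h0 := hp ((M+1) *: v - w).
rewrite qformE bfBl !bfBr !bfZl !bfZr e1 e2 -qformE in h0.
have hS := sqnorm_ge0 v.
nra.
Qed.

Lemma two_neq0 : (2%:R : R) != 0.
Proof. by rewrite pnatr_eq0. Qed.

Lemma diffsq n (A : 'M[R]_n) a b : A^T = A ->
  qform A a - qform A b = 2%:R * bf A ((2%:R)^-1 *: (a + b)) (a - b).
Proof.
move=> hs; rewrite !qformE bfZl bfDl !bfBr (bfC A b a) hs.
move: (bf A a a) (bf A a b) (bf A b b) => x y w.
rewrite mulrA mulfV ?mul1r //.
ring.
Qed.

Lemma zmod_id n p (a b c p1 q r : 'M[R]_(n, p)) :
  (a + c + p1) - (b + c + q) = (a - b) + (p1 - r) + (r - q).
Proof. apply/matrixP => i j; rewrite !mxE; ring. Qed.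

Lemma gdiff n m (J G : 'I_m -> 'M[R]_n) (Q : 'M[R]_n) E z xs :
  ginput J G Q E z - ginput J G Q E xs =
  \matrix_(i < n, j < m) ((J j *m Q *m (z - xs)) i 0).
Proof.
apply/matrixP => i j; rewrite [RHS]mxE mulmxBr /ginput !mxE; ring.
Qed.

Lemma skew_row n m (J G : 'I_m -> 'M[R]_n) (Q : 'M[R]_n) E z xs :
  Q^T = Q -> (forall i, (J i)^T = - J i) ->
  (z - xs)^T *m Q *m (ginput J G Q E z - ginput J G Q E xs) = 0.
Proof.
move=> hQ hJ; rewrite gdiff; apply/matrixP => i j; rewrite [RHS]mxE.
set M := \matrix_(i1 < n, j0 < m) (J j0 *m Q *m (z - xs)) i1 0.
have hc : col j M = J j *m Q *m (z - xs).
  by apply/matrixP => a b; rewrite !mxE (ord1 b).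
transitivity ((col j ((z - xs)^T *m Q *m M)) i 0); first by rewrite [RHS]mxE.
rewrite colE -mulmxA -colE hc (ord1 i).
have -> : ((z - xs)^T *m Q *m (J j *m Q *m (z - xs))) 0 0 =
   bf (Q *m (J j *m Q)) (z - xs) (z - xs).
  by rewrite /bf !mulmxA.
apply: bf_skew; by rewrite !trmx_mul hQ hJ mulmxN mulNmx mulmxA.
Qed.

Lemma half_sum n p (a b c : 'M[R]_(n, p)) :
  (2%:R)^-1 *: ((a - c) + (b - c)) = (2%:R)^-1 *: (a + b) - c.
Proof.
apply/matrixP => i j; rewrite !mxE.
move: (a i j) (b i j) (c i j) => x y w.
rewrite mulrDr mulrBr mulrBr; have h2 := two_neq0.
by field.
Qed.

Lemma expand_u m (y w1 v us : 'cV[R]_m) (KP KI KDC : 'M[R]_m) (d : R) :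
  bf 1%:M y (- (KP *m y) - (2%:R)^-1 *: (KI *m w1) - d *: (KDC *m v) - us)
  = - bf KP y y - (2%:R)^-1 * bf KI y w1 - d * bf KDC y v - bf 1%:M y us.
Proof. by rewrite !bfBr !bfNr !bfZr !bf_mulr !mul1mx. Qed.

Lemma dissip n m (Q J0 Rd G0 : 'M[R]_n) (J G : 'I_m -> 'M[R]_n) (E : 'cV[R]_n)
  (hQs : Q^T = Q) (hJ0 : J0^T = - J0) (hJ : forall i, (J i)^T = - J i)
  (delta : R) (hd : delta != 0) (xs : 'cV[R]_n) (us : 'cV[R]_m)
  (heq : fdrift J0 Rd Q G0 E xs + ginput J G Q E xs *m us = 0)
  (KP KI KD : 'M[R]_m) (hKI : KI^T = KI) (hKIu : KI \in unitmx) (hKD : KD^T = KD)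
  (x0 x1 : 'cV[R]_n) (xi0 xi1 u : 'cV[R]_m) :
  let gs := ginput J G Q E xs in
  let C := gs^T *m Q in
  let xis := - (invmx KI *m us) in
  let z := (2%:R)^-1 *: (x1 + x0) in
  let yt := C *m (z - xs) in
  x1 = x0 + delta *: fdrift J0 Rd Q G0 E z + delta *: (ginput J G Q E z *m u) ->
  xi1 = xi0 + delta *: yt ->
  u = - (KP *m yt) - (2%:R)^-1 *: (KI *m (xi1 + xi0))
      - delta^-1 *: (KD *m C *m (x1 - x0)) ->
  Vlyap Q C KI KD delta xs xis x1 xi1 - Vlyap Q C KI KD delta xs xis x0 xi0
   = - qform (Q *m (Rd + gs *m KP *m gs^T) *m Q) (z - xs).
Proof.
move=> gs C xis z yt hx hxi hu.
have hCC : (C^T *m KD *m C)^T = C^T *m KD *m C.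
  by rewrite /C !trmx_mul !trmxK hKD !mulmxA.
have eV : Vlyap Q C KI KD delta xs xis x1 xi1 - Vlyap Q C KI KD delta xs xis x0 xi0
  = delta^-1 * ((2%:R)^-1 * (qform Q (x1 - xs) - qform Q (x0 - xs))
     + (2%:R)^-1 * (qform KI (xi1 - xis) - qform KI (xi0 - xis))
     + (2%:R)^-1 * (qform (C^T *m KD *m C) (x1 - xs) - qform (C^T *m KD *m C) (x0 - xs))).
  rewrite /Vlyap.
  move: (qform Q (x1 - xs)) (qform Q (x0 - xs)) (qform KI (xi1 - xis)) (qform KI (xi0 - xis))
    (qform (C^T *m KD *m C) (x1 - xs)) (qform (C^T *m KD *m C) (x0 - xs)) => a1 a2 a3 a4 a5 a6.
  ring.
rewrite eV (diffsq _ _ hQs) (diffsq _ _ hKI) (diffsq _ _ hCC) !half_sum -/z.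
have hD1 : (x1 - xs) - (x0 - xs) = x1 - x0 by rewrite opprB addrA subrK.
have hD2 : (xi1 - xis) - (xi0 - xis) = delta *: yt.
  by rewrite opprB addrA subrK hxi addrAC subrr add0r.
rewrite hD1 hD2.
set ez := z - xs.
set D := x1 - x0.
have hD : D = delta *: (fdrift J0 Rd Q G0 E z + ginput J G Q E z *m u).
  by rewrite /D hx; apply/matrixP => i j; rewrite !mxE; ring.
have hF : fdrift J0 Rd Q G0 E z + ginput J G Q E z *m u =
   (J0 - Rd) *m Q *m ez + (ginput J G Q E z - gs) *m u + gs *m (u - us).
  rewrite -[LHS]subr0 -heq /fdrift (zmod_id _ _ _ _ _ (gs *m u)).
  by rewrite -!mulmxBr -mulmxBl.
have t1 : bf Q ez ((J0 - Rd) *m Q *m ez) = - bf (Q *m Rd *m Q) ez ez.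
  rewrite bf_mulr mulmxA mulmxBr mulmxBl bfBm bf_skew ?sub0r //.
  by rewrite !trmx_mul hQs hJ0 mulNmx mulmxN mulmxA.
have t2 : bf Q ez ((ginput J G Q E z - gs) *m u) = 0.
  by rewrite /bf mulmxA skew_row // mul0mx mxE.
have t3 : bf Q ez (gs *m (u - us)) = bf 1%:M yt (u - us).
  by rewrite /yt bf_mull mulmx1 /C trmx_mul trmxK hQs bf_mulr.
have t4 : bf (C^T *m KD *m C) ez D = bf (KD *m C) yt D.
  by rewrite /yt bf_mull mulmxA.
have t5 : bf KI ((2%:R)^-1 *: (xi1 + xi0) - xis) yt
    = (2%:R)^-1 * bf KI yt (xi1 + xi0) + bf 1%:M yt us.
  rewrite bfC hKI bfBr bfZr /xis bfNr bf_mulr mulmxV //; ring.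
have t6 : qform (Q *m (Rd + gs *m KP *m gs^T) *m Q) ez
    = bf (Q *m Rd *m Q) ez ez + bf KP yt yt.
  rewrite qformE mulmxDr mulmxDl bfDm; congr (_ + _).
  by rewrite /yt bf_mull bf_mulr /C trmx_mul trmxK hQs !mulmxA.
have t7 : bf 1%:M yt (u - us) = - bf KP yt yt - (2%:R)^-1 * bf KI yt (xi1 + xi0)
     - delta^-1 * bf (KD *m C) yt D - bf 1%:M yt us.
  have eD : x1 - x0 = D by []. rewrite {1}hu. clearbody yt D. by rewrite !bfBr !bfNr !bfZr !bf_mulr !mul1mx eD.
rewrite t4 bfZr t5 t6 [in bf Q ez D]hD bfZr hF !(bfDr Q ez) t1 t2 t3 t7.
move: (bf (Q *m Rd *m Q) ez ez) (bf KP yt yt) (bf KI yt (xi1 + xi0))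
  (bf (KD *m C) yt D) (bf 1%:M yt us) => a1 a2 a3 a4 a5.
by field.
Qed.

Lemma posdef_psd n (A : 'M[R]_n) : sym_posdef A -> forall v, 0 <= qform A v.
Proof.
move=> [_ hp] v; have [->|hv] := eqVneq v 0.
  by rewrite /qform mulmx0 mxE.
exact: ltW (hp v hv).
Qed.

Lemma bfZm p q (A : 'M[R]_(p, q)) a u v : bf (a *: A) u v = a * bf A u v.
Proof. by rewrite /bf -scalemxAr -scalemxAl mxE. Qed.

Lemma sqnorm_mul p q (A : 'M[R]_(p, q)) v :
  sqnorm (A *m v) = qform (A^T *m A) v.
Proof. by rewrite sqnormE bf_mull bf_mulr mulmx1 qformE. Qed.

Lemma sqnorm_mul_le p q (A : 'M[R]_(p, q)) v :
  sqnorm (A *m v) <= mxabs (A^T *m A) * sqnorm v.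
Proof. rewrite sqnorm_mul qformE; exact: le_trans (ler_norm _) (bf_bound _ _). Qed.

Lemma cvg_from_sq p (w : nat -> 'cV[R]_p) l (D : nat -> R) c : 0 <= c ->
  D n @[n --> \oo] --> 0 -> (forall k, sqnorm (w k - l) <= c * D k) ->
  w n @[n --> \oo] --> l.
Proof.
move=> c0 hD hw; apply/cvgrPdist_le => e e0.
have e2 : 0 < e ^+ 2 / (c + 1) by rewrite divr_gt0 // ?exprn_gt0 //; lra.
move/cvgrPdist_lt : hD => /(_ _ e2); apply: filterS => k hk.
rewrite [leLHS]/Num.Def.normr/= mx_normrE (bigmax_le _ (ltW e0))//= => -[i j] _.
rewrite /= (ord1 j) -[l - w k]opprB mxE normrN.
have h1 := sq_le_sqnorm (w k - l) i.
have h2 := hw k.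
rewrite sub0r normrN ltr_pdivlMr in hk; last by lra.
have h3 := ler_norm (D k).
have h4 := normr_ge0 (D k).
move: h1 h2 hk h3 h4; set x := (w k - l) i 0; set S := sqnorm (w k - l).
set d := D k; move=> h1 h2 hk h3 h4.
rewrite ler_norml; apply/andP; split; nra.
Qed.

End BF.

Theorem proposition4 (R : realType) (n m : nat) (hn : (0 < n)%N) (hm : (0 < m)%N)
  (Q J0 Rd G0 : 'M[R]_n) (J G : 'I_m -> 'M[R]_n) (E : 'cV[R]_n)
  (hQ : sym_posdef Q)
  (hJ0 : J0^T = - J0) (hJ : forall i, (J i)^T = - J i)
  (hR : sym_psd Rd)
  (delta : R) (hdelta : 0 < delta)
  (xs : 'cV[R]_n) (us : 'cV[R]_m)
  (heq : fdrift J0 Rd Q G0 E xs + ginput J G Q E xs *m us = 0)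
  (KP KI KD : 'M[R]_m)
  (hKP : sym_posdef KP) (hKI : sym_posdef KI) (hKD : sym_psd KD) :
  let gs := ginput J G Q E xs in
  let C := gs^T *m Q in
  let xis := - (invmx KI *m us) in
  let sol := closed_loop_sol Q J0 Rd G0 J G E delta xs KP KI KD in
  let V := Vlyap Q C KI KD delta xs xis in
  (* (i) dissipation identity for V along every solution *)
  (forall x xi u, sol x xi u -> forall k : nat,
      V (x k.+1) (xi k.+1) - V (x k) (xi k)
        = - qform (Q *m (Rd + gs *m KP *m gs^T) *m Q) (midpt x k - xs)
      /\ V (x k.+1) (xi k.+1) - V (x k) (xi k) <= 0)
  (* (i) Lyapunov stability of the equilibrium (xs, xis) *)
  /\ (forall eps : R, 0 < eps -> exists d : R, 0 < d /\
        forall x xi u, sol x xi u ->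
          sqnorm (x 0%N - xs) + sqnorm (xi 0%N - xis) < d ->
          forall k : nat, sqnorm (x k - xs) + sqnorm (xi k - xis) < eps)
  (* (i) every solution is bounded *)
  /\ (forall x xi u, sol x xi u -> exists B : R,
        forall k : nat, sqnorm (x k - xs) + sqnorm (xi k - xis) <= B)
  (* (ii) convergence under the strict dissipation condition *)
  /\ ((exists alpha : R, 0 < alpha /\ mx_gt (Rd + gs *m KP *m gs^T) (alpha%:M)) ->
      forall x xi u, sol x xi u ->
        (midpt x k @[k --> \oo] --> xs)
        /\ ((gs^T *m Q *m midpt x k) @[k --> \oo] --> gs^T *m Q *m xs)).
Proof.
move=> gs C xis sol V.
have [hQs hQp] := hQ; have [hKIs hKIp] := hKI; have [hKDs hKDp] := hKD.
have [hRs hRp] := hR; have [hKPs hKPp] := hKP.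
have hd0 : delta != 0 by rewrite gt_eqF.
have hKIu := posdef_unit hKI.
set Mx := Rd + gs *m KP *m gs^T.
have hMx : forall w, 0 <= qform Mx w.
  move=> w; rewrite /Mx qformE bfDm -!qformE.
  have -> : qform (gs *m KP *m gs^T) w = qform KP (gs^T *m w).
    by rewrite !qformE bf_mull bf_mulr trmxK.
  by rewrite addr_ge0 // ?(posdef_psd hKP).
have hQMQ : forall z, qform (Q *m Mx *m Q) z = qform Mx (Q *m z).
  by move=> z; rewrite !qformE [RHS]bf_mull bf_mulr hQs ?mulmxA.
have hdiss : forall x xi u, sol x xi u -> forall k,
    V (x k.+1) (xi k.+1) - V (x k) (xi k) = - qform (Q *m Mx *m Q) (midpt x k - xs).
  move=> x xi u hs k; have [h1 h2 h3] := hs k.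
  exact: (dissip hQs hJ0 hJ hd0 heq hKIs hKIu hKDs h1 h2 h3).
have hstep : forall x xi u, sol x xi u -> forall k,
    V (x k.+1) (xi k.+1) <= V (x k) (xi k).
  move=> x xi u hs k; rewrite -subr_le0 (hdiss x xi u hs k) hQMQ oppr_le0.
  exact: hMx.
have hCC : forall v, 0 <= qform (C^T *m KD *m C) v.
  by move=> v; rewrite qformE -bf_mulr -bf_mull; apply: hKDp.
have [KQ [KQ0 hKQ]] := coerc hQs (posdef_psd hQ) (posdef_unit hQ).
have [KKI [KKI0 hKKI]] := coerc hKIs (posdef_psd hKI) hKIu.
set L := 2%:R * delta * (KQ + KKI).
have L0 : 0 < L by rewrite /L; apply: mulr_gt0; [apply: mulr_gt0 => //; lra | lra].
have hlow : forall a b, sqnorm (a - xs) + sqnorm (b - xis) <= L * V a b.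
  move=> a b; rewrite /V /Vlyap /L.
  have h1 := hKQ (a - xs); have h2 := hKKI (b - xis); have h3 := hCC (a - xs).
  have h4 := posdef_psd hQ (a - xs); have h5 := posdef_psd hKI (b - xis).
  move: h1 h2 h3 h4 h5.
  move: (qform Q (a - xs)) (qform KI (b - xis)) (qform (C^T *m KD *m C) (a - xs))
    (sqnorm (a - xs)) (sqnorm (b - xis)) => q1 q2 q3 s1 s2 h1 h2 h3 h4 h5.
  have -> : 2%:R * delta * (KQ + KKI) * (delta^-1 * (2%:R^-1 * q1 + 2%:R^-1 * q2 + 2%:R^-1 * q3))
    = (KQ + KKI) * (q1 + q2 + q3) by field.
  nra.
set U := delta^-1 * (mxabs Q + mxabs KI + mxabs (C^T *m KD *m C)).
have U0 : 0 <= U.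
  rewrite /U mulr_ge0 ?invr_ge0 ?addr_ge0 ?mxabs_ge0 //; lra.
have hup : forall a b, V a b <= U * (sqnorm (a - xs) + sqnorm (b - xis)).
  move=> a b; rewrite /V /Vlyap /U.
  have h1 := le_trans (ler_norm _) (bf_bound Q (a - xs)).
  have h2 := le_trans (ler_norm _) (bf_bound KI (b - xis)).
  have h3 := le_trans (ler_norm _) (bf_bound (C^T *m KD *m C) (a - xs)).
  have h4 := posdef_psd hQ (a - xs); have h5 := posdef_psd hKI (b - xis).
  have h6 := hCC (a - xs).
  have h7 := sqnorm_ge0 (a - xs); have h8 := sqnorm_ge0 (b - xis).
  have h9 := mxabs_ge0 Q; have h10 := mxabs_ge0 KI; have h11 := mxabs_ge0 (C^T *m KD *m C).
  have h12 : 0 < delta^-1 by rewrite invr_gt0.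
  rewrite -!qformE in h1 h2 h3.
  move: h1 h2 h3 h4 h5 h6 h7 h8 h9 h10 h11 h12.
  move: (qform Q (a - xs)) (qform KI (b - xis)) (qform (C^T *m KD *m C) (a - xs))
    (sqnorm (a - xs)) (sqnorm (b - xis)) (mxabs Q) (mxabs KI) (mxabs (C^T *m KD *m C))
    (delta^-1) => q1 q2 q3 s1 s2 m1 m2 m3 di h1 h2 h3 h4 h5 h6 h7 h8 h9 h10 h11 h12.
  rewrite -mulrA; apply: ler_wpM2l; first exact: ltW.
  have g1 : 0 <= m1 * s2 by apply: mulr_ge0.
  have g2 : 0 <= m2 * s1 by apply: mulr_ge0.
  have g3 : 0 <= m3 * s2 by apply: mulr_ge0.
  nra.
have hVmon : forall x xi u, sol x xi u -> forall k, V (x k) (xi k) <= V (x 0%N) (xi 0%N).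
  move=> x xi u hs; elim => [|k ih] //.
  exact: le_trans (hstep x xi u hs k) ih.
have hN : forall x xi u, sol x xi u -> forall k,
    sqnorm (x k - xs) + sqnorm (xi k - xis)
    <= L * U * (sqnorm (x 0%N - xs) + sqnorm (xi 0%N - xis)).
  move=> x xi u hs k.
  apply: (le_trans (hlow _ _)); rewrite -mulrA; apply: ler_wpM2l; first exact: ltW.
  exact: le_trans (hVmon x xi u hs k) (hup _ _).
split.
  move=> x xi u hs k; rewrite (hdiss x xi u hs k); split => //.
  by rewrite hQMQ oppr_le0.
split.
  move=> eps e0; exists (eps / (L * U + 1)); split.
    by rewrite divr_gt0 //; nra.
  move=> x xi u hs h0 k; have := hN x xi u hs k.
  have LU0 : 0 <= L * U by rewrite mulr_ge0 // ltW.
  have hd : eps / (L * U + 1) * (L * U + 1) = eps.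
    by rewrite mulfVK //; rewrite gt_eqF //; lra.
  have hN0 : 0 <= sqnorm (x 0%N - xs) + sqnorm (xi 0%N - xis) by rewrite addr_ge0 ?sqnorm_ge0.
  move: h0 hd LU0 hN0; move: (eps / (L * U + 1)) (L * U)
    (sqnorm (x k - xs) + sqnorm (xi k - xis))
    (sqnorm (x 0%N - xs) + sqnorm (xi 0%N - xis)) => d P Nk N0 h0 hd LU0 hN0 hk.
  nra.
split.
  move=> x xi u hs; exists (L * U * (sqnorm (x 0%N - xs) + sqnorm (xi 0%N - xis))).
  exact: hN x xi u hs.
move=> [alpha [ha hgt]] x xi u hs.
have hal : forall w, alpha * sqnorm w <= qform Mx w.
  move=> w; have := posdef_psd hgt w.
  by rewrite qformE bfBm -scalemx1 bfZm -sqnormE -qformE subr_ge0.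
have hQQs : (Q^T *m Q)^T = Q^T *m Q by rewrite trmx_mul trmxK.
have hQQp : forall v, 0 <= qform (Q^T *m Q) v.
  by move=> v; rewrite -sqnorm_mul sqnorm_ge0.
have hQQu : Q^T *m Q \in unitmx.
  by rewrite unitmx_mul unitmx_tr posdef_unit.
have [KQQ [KQQ0 hKQQ]] := coerc hQQs hQQp hQQu.
set v := fun k => V (x k) (xi k).
have hni : nonincreasing_seq v by apply/nonincreasing_seqP => k; exact: hstep x xi u hs k.
have hlb : has_lbound (range v).
  exists 0 => _ [k _ <-]; rewrite /v.
  have := hlow (x k) (xi k).
  have := addr_ge0 (sqnorm_ge0 (x k - xs)) (sqnorm_ge0 (xi k - xis)).
  move: (sqnorm (x k - xs) + sqnorm (xi k - xis)) (V (x k) (xi k)) => a b h1 h2.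
  nra.
have hv := nonincreasing_cvgn hni hlb.
have hv1 : (fun k => v k.+1) @ \oo --> inf (range v) by rewrite cvg_shiftS.
have hD0 : (fun k => v k - v k.+1) @ \oo --> 0.
  have := cvgB hv hv1; rewrite subrr; move=> h; apply: h.
have hbound : forall k, sqnorm (midpt x k - xs) <= KQQ / alpha * (v k - v k.+1).
  move=> k; have e := hdiss x xi u hs k; rewrite hQMQ in e.
  have h1 := hKQQ (midpt x k - xs); rewrite -sqnorm_mul in h1.
  have h2 := hal (Q *m (midpt x k - xs)).
  have e' : v k - v k.+1 = qform Mx (Q *m (midpt x k - xs)).
    by rewrite /v -[LHS]opprB e opprK.
  rewrite e' mulrAC ler_pdivlMr //.
  move: h1 h2; move: (sqnorm (midpt x k - xs)) (sqnorm (Q *m (midpt x k - xs)))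
    (qform Mx (Q *m (midpt x k - xs))) => a b c h1 h2.
  nra.
split.
  apply: (cvg_from_sq _ hD0 hbound).
  by rewrite divr_ge0 // ltW.
apply: (@cvg_from_sq _ _ _ _ _ (mxabs ((gs^T *m Q)^T *m (gs^T *m Q)) * (KQQ / alpha)) _ hD0).
  by rewrite mulr_ge0 ?mxabs_ge0 // divr_ge0 // ltW.
move=> k; rewrite -mulmxBr; apply: (le_trans (sqnorm_mul_le _ _)).
rewrite -mulrA; apply: ler_wpM2l; first exact: mxabs_ge0.
exact: hbound.
Qed.
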